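(* Let $(G,g)$ be a six-dimensional semi-Riemannian Lie group with a subgroup $K\cong\mathrm{SU}(2)\times\mathrm{SO}(2)$, and let $\mathcal F$ be the left-invariant foliation generated by $K$, with tangent distribution $\mathcal V$. Let $\{A,B,C,T,X,Y\}$ be an orthonormal basis of the Lie algebra $\mathfrak g$ of $G$ such that $A,B,C$ span $\mathfrak{su}(2)$ with $[A,B]=2C$, $[C,A]=2B$, $[B,C]=2A$, $T$ spans $\mathfrak{so}(2)$ (so $X,Y$ span the orthogonal complement of $\mathfrak{su}(2)\times\mathfrak{so}(2)$), and suppose the remaining brackets have the form $[E,X]=e_{11}A+e_{12}B+e_{13}C+e_{14}T$, $[E,Y]=e_{21}A+e_{22}B+e_{23}C+e_{24}T$ for $E\in\{A,B,C\}$, $[T,X]=x_1X+y_1Y+t_{11}A+t_{12}B+t_{13}C+t_{14}T$, $[T,Y]=x_2X+y_2Y+t_{21}A+t_{22}B+t_{23}C+t_{24}T$, $[X,Y]=\rho X+\theta_1A+\theta_2B+\theta_3C+\theta_4T$, with real coefficients. Then $\mathcal F$ is conformal if and only if $$x_1=y_2\quad\text{and}\quad \varepsilon_Xx_2+\varepsilon_Yy_1=0.$$ In that case, $\mathcal F$ is semi-Riemannian if and only if $x_1=y_2=0$.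
   Context: A semi-Riemannian Lie group $(G,g)$ is a Lie group with a left-invariant non-degenerate metric $g$ of arbitrary signature; its Lie algebra is identified with the left-invariant vector fields. $K$ generates the foliation $\mathcal F$ by its left translates; $\mathcal V$ is spanned by the Lie algebra of $K$ and $\mathcal H$ (spanned by $X,Y$) is its orthogonal complement. Orthonormal means $g(E_i,E_j)=\varepsilon_{E_i}\delta_{ij}$ with $\varepsilon_{E_i}=g(E_i,E_i)\in\{\pm1\}$. With $\nabla$ the Levi-Civita connection and $\mathcal V$ also the orthogonal projection, $B^{\mathcal H}(E,F)=\tfrac12\mathcal V(\nabla_EF+\nabla_FE)$ for $E,F\in\mathcal H$. $\mathcal F$ is conformal if there is a vector field $V$ in $\mathcal V$ with $B^{\mathcal H}(E,F)=g(E,F)V$ for all $E,F\in\mathcal H$, and semi-Riemannian if $B^{\mathcal H}=0$. *)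

(* Defs.v *)
(* The Lie algebra g of G is modelled as R^6 = 'rV[R]_6 with
   the standard basis e_0..e_5 playing the role of A,B,C,T,X,Y. *)
From HB Require Import structures.
From mathcomp Require Import all_boot all_order all_algebra.
From mathcomp Require Import all_classical all_reals.
Set Implicit Arguments. Unset Strict Implicit. Unset Printing Implicit Defensive.
Import Order.TTheory GRing.Theory Num.Theory.
Local Open Scope ring_scope.

Definition vec (R : realType) := 'rV[R]_6.

Definition bas (R : realType) (i : 'I_6) : vec R := delta_mx 0 i.
Definition iA : 'I_6 := @Ordinal 6 0 isT.
Definition iB : 'I_6 := @Ordinal 6 1 isT.
Definition iC : 'I_6 := @Ordinal 6 2 isT.
Definition iT : 'I_6 := @Ordinal 6 3 isT.
Definition iX : 'I_6 := @Ordinal 6 4 isT.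
Definition iY : 'I_6 := @Ordinal 6 5 isT.

Definition su2 (R : realType) (k : 'I_3) : vec R := bas R (widen_ord (isT : 3 <= 6)%N k).
Definition vcomb (R : realType) (f : 'I_4 -> R) : vec R :=
  \sum_(j < 4) f j *: bas R (widen_ord (isT : 4 <= 6)%N j).

(* left-invariant metric, diagonal of signature eps in the basis: the basis
   is orthonormal, g(E_i,E_j) = eps_i delta_ij *)
Definition gmet (R : realType) (eps : 'I_6 -> R) (u v : vec R) : R :=
  \sum_(i < 6) eps i * u 0 i * v 0 i.

Definition Vproj (R : realType) (u : vec R) : vec R :=
  \row_(i < 6) (if (i < 4)%N then u 0 i else 0).

Definition is_vertical (R : realType) (u : vec R) := Vproj u = u.
Definition is_horizontal (R : realType) (u : vec R) := Vproj u = 0.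

(* Levi-Civita connection on left-invariant fields: torsion free and metric *)
Definition is_levi_civita (R : realType) (eps : 'I_6 -> R)
    (br nabla : vec R -> vec R -> vec R) :=
  (forall u v, nabla u v - nabla v u = br u v) /\
  (forall u v w, gmet eps (nabla u v) w + gmet eps v (nabla u w) = 0).

Definition BH (R : realType) (nabla : vec R -> vec R -> vec R) (E F : vec R) : vec R :=
  2^-1 *: Vproj (nabla E F + nabla F E).

Definition conformal_fol (R : realType) (eps : 'I_6 -> R)
    (nabla : vec R -> vec R -> vec R) :=
  exists V : vec R, is_vertical V /\
    forall E F, is_horizontal E -> is_horizontal F ->
      BH nabla E F = gmet eps E F *: V.

Definition semiriem_fol (R : realType) (nabla : vec R -> vec R -> vec R) :=
  forall E F : vec R, is_horizontal E -> is_horizontal F -> BH nabla E F = 0.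

Definition is_lie_bracket (R : realType) (br : vec R -> vec R -> vec R) :=
  (forall (a : R) u v w, br (a *: u + v) w = a *: br u w + br v w) /\
  (forall u v, br u v = - br v u) /\
  (forall u v w, br u (br v w) + br v (br w u) + br w (br u v) = 0).

(* Main.v *)
Require Import Defs.
From HB Require Import structures.
From mathcomp Require Import all_boot all_order all_algebra.
From mathcomp Require Import all_classical all_reals.
From mathcomp Require Import ring lra.
Import Order.TTheory GRing.Theory Num.Theory.
Local Open Scope ring_scope.

Lemma bas_entry (R : realType) (i j : 'I_6) : bas R i 0 j = (j == i)%:R.
Proof. by rewrite /bas mxE eqxx. Qed.

Lemma gmetDl (R : realType) eps (u v w : vec R) : gmet eps (u + v) w = gmet eps u w + gmet eps v w.
Proof. rewrite /gmet -big_split /=; apply eq_bigr => i _; rewrite !mxE; ring. Qed.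
Lemma gmetZl (R : realType) eps a (u w : vec R) : gmet eps (a *: u) w = a * gmet eps u w.
Proof. rewrite /gmet mulr_sumr; apply eq_bigr => i _; rewrite !mxE; ring. Qed.
Lemma gmetNl (R : realType) eps (u w : vec R) : gmet eps (- u) w = - gmet eps u w.
Proof. rewrite /gmet -sumrN; apply eq_bigr => i _; rewrite !mxE; ring. Qed.
Lemma gmetC (R : realType) eps (u w : vec R) : gmet eps u w = gmet eps w u.
Proof. rewrite /gmet; apply eq_bigr => i _; ring. Qed.
Lemma gmet0l (R : realType) eps (w : vec R) : gmet eps 0 w = 0.
Proof. rewrite /gmet big1 // => i _; rewrite !mxE; ring. Qed.
Lemma gmet_bas (R : realType) eps (u : vec R) j : gmet eps u (bas R j) = eps j * u 0 j.
Proof.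
rewrite /gmet (bigD1 j) //= big1 ?addr0; first by rewrite bas_entry eqxx mulr1.
by move=> i /negbTE Hij; rewrite bas_entry Hij mulr0.
Qed.
Lemma gmet_basl (R : realType) eps (u : vec R) j : gmet eps (bas R j) u = eps j * u 0 j.
Proof. by rewrite gmetC gmet_bas. Qed.

Lemma horiz0 (R : realType) (F : vec R) (j : 'I_6) : is_horizontal F -> (j < 4)%N -> F 0 j = 0.
Proof. move=> hF hj; have := congr1 (fun M : vec R => M 0 j) hF; by rewrite !mxE hj. Qed.

Lemma gmet_vcomb (R : realType) eps f (F : vec R) : is_horizontal F -> gmet eps (vcomb f) F = 0.
Proof.
move=> hF; rewrite /vcomb; apply: (big_ind (fun x => gmet eps x F = 0)).
- exact: gmet0l.
- by move=> x y hx hy; rewrite gmetDl hx hy addr0.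
- move=> j _; rewrite gmetZl gmet_basl (horiz0 _ _ _ hF) ?mulr0 //=.
Qed.

Lemma horiz_dec (R : realType) (E : vec R) : is_horizontal E ->
  E = E 0 iX *: bas R iX + E 0 iY *: bas R iY.
Proof.
move=> hE; apply/rowP => j; rewrite !mxE eqxx /=.
case: j => [[|[|[|[|[|[|j]]]]]] Hj] //=; rewrite ?mulr0 ?mulr1 ?addr0 ?add0r.

all: try (by rewrite (horiz0 _ _ _ hE)).
- by congr (E 0 _); apply: val_inj.
- by congr (E 0 _); apply: val_inj.
Qed.

Lemma basX_h (R : realType) : is_horizontal (bas R iX).
Proof. apply/rowP => j; rewrite !mxE; case: j => [[|[|[|[|[|[|j]]]]]] Hj] //=. Qed.
Lemma basY_h (R : realType) : is_horizontal (bas R iY).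
Proof. apply/rowP => j; rewrite !mxE; case: j => [[|[|[|[|[|[|j]]]]]] Hj] //=. Qed.

Theorem lemma8p1 (R : realType) (eps : 'I_6 -> R)
  (heps : forall i, eps i = 1 \/ eps i = -1)
  (br : vec R -> vec R -> vec R) (hlie : is_lie_bracket br)
  (eX eY : 'I_3 -> 'I_4 -> R) (x1 y1 x2 y2 rho : R) (t1 t2 th : 'I_4 -> R)
  (hAB : br (bas R iA) (bas R iB) = 2 *: bas R iC)
  (hCA : br (bas R iC) (bas R iA) = 2 *: bas R iB)
  (hBC : br (bas R iB) (bas R iC) = 2 *: bas R iA)
  (hTE : forall k, br (bas R iT) (su2 R k) = 0)
  (hEX : forall k, br (su2 R k) (bas R iX) = vcomb (eX k))
  (hEY : forall k, br (su2 R k) (bas R iY) = vcomb (eY k))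
  (hTX : br (bas R iT) (bas R iX) = x1 *: bas R iX + y1 *: bas R iY + vcomb t1)
  (hTY : br (bas R iT) (bas R iY) = x2 *: bas R iX + y2 *: bas R iY + vcomb t2)
  (hXY : br (bas R iX) (bas R iY) = rho *: bas R iX + vcomb th)
  (nabla : vec R -> vec R -> vec R) (hLC : is_levi_civita eps br nabla) :
  (conformal_fol eps nabla <-> x1 = y2 /\ eps iX * x2 + eps iY * y1 = 0) /\
  (conformal_fol eps nabla -> (semiriem_fol nabla <-> x1 = 0 /\ y2 = 0)).
Proof.
have [lin [anti _]] := hlie.
have [tor met] := hLC.
have e2 : forall i, eps i * eps i = 1 by move=> i; case: (heps i) => ->; ring.
have en0 : forall i, eps i != 0.
  by move=> i; case: (heps i) => ->; rewrite ?oppr_eq0 oner_eq0.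
have br0l : forall w, br 0 w = 0.
  move=> w; have h := lin 1 0 0 w; rewrite scaler0 addr0 scale1r in h.
  by apply: (@addrI _ (br 0 w)); rewrite addr0 -h.
have br0r : forall u, br u 0 = 0 by move=> u; rewrite anti br0l oppr0.
have brr : forall a u v w, br u (a *: v + w) = a *: br u v + br u w.
  move=> a u v w; rewrite (anti u (a *: v + w)) lin (anti v u) (anti w u).
  by rewrite scalerN -opprD opprK.
have koz : forall u v w, 2 * gmet eps (nabla u v) w =
    gmet eps (br u v) w - gmet eps (br v w) u + gmet eps (br w u) v.
  move=> u v w.
  have q1 := congr1 (fun z => gmet eps z w) (tor u v).
  have q2 := congr1 (fun z => gmet eps z u) (tor v w).
  have q3 := congr1 (fun z => gmet eps z v) (tor w u).
  rewrite /= gmetDl gmetNl in q1; rewrite /= gmetDl gmetNl in q2; rewrite /= gmetDl gmetNl in q3.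
  have m1 := met u v w; have m2 := met v u w; have m3 := met w v u.
  rewrite [gmet eps v _]gmetC in m1; rewrite [gmet eps u _]gmetC in m2.
  rewrite [gmet eps v _]gmetC in m3.
  rewrite -q1 -q2 -q3; lra.
have entry : forall (u : vec R) i, u 0 i = eps i * gmet eps u (bas R i).
  by move=> u i; rewrite gmet_bas mulrA e2 mul1r.
have BHe : forall E F (i : 'I_6), (i < 4)%N -> BH nabla E F 0 i =
    eps i * (gmet eps (br (bas R i) E) F + gmet eps (br (bas R i) F) E) / 2.
  move=> E F i hi; rewrite /BH !mxE hi.
  rewrite (entry (nabla E F)) (entry (nabla F E)).
  have k1 := koz E F (bas R i); have k2 := koz F E (bas R i).
  rewrite (anti F E) (anti F (bas R i)) (anti E (bas R i)) !gmetNl in k1 k2.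
  have hs : gmet eps (nabla E F) (bas R i) + gmet eps (nabla F E) (bas R i) =
     gmet eps (br (bas R i) E) F + gmet eps (br (bas R i) F) E by lra.
  by rewrite -mulrDr hs mulrC.
have brH : forall u E, is_horizontal E ->
    br u E = E 0 iX *: br u (bas R iX) + E 0 iY *: br u (bas R iY).
  move=> u E hE; rewrite {1}(horiz_dec _ _ hE) brr.
  by rewrite -[E 0 iY *: bas R iY]addr0 brr br0r addr0.
have QE : forall k E F, is_horizontal E -> is_horizontal F ->
    gmet eps (br (su2 R k) E) F = 0.
  move=> k E F hE hF; rewrite brH // hEX hEY gmetDl !gmetZl !gmet_vcomb //.
  by rewrite !mulr0 addr0.
pose qT := fun E F : vec R => E 0 iX * (x1 * eps iX * F 0 iX + y1 * eps iY * F 0 iY)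
   + E 0 iY * (x2 * eps iX * F 0 iX + y2 * eps iY * F 0 iY).
have QT : forall E F, is_horizontal E -> is_horizontal F ->
    gmet eps (br (bas R iT) E) F = qT E F.
  move=> E F hE hF; rewrite brH // hTX hTY !gmetDl !gmetZl !gmetDl !gmetZl !gmet_vcomb //.
  rewrite !gmet_basl /qT; ring.
have BHf : forall E F, is_horizontal E -> is_horizontal F ->
    BH nabla E F = (eps iT * ((qT E F + qT F E) / 2)) *: bas R iT.
  move=> E F hE hF; apply/rowP => j; rewrite [RHS]mxE bas_entry.
  case: j => [[|[|[|[|[|[|j]]]]]] Hj] //=.
  - rewrite BHe //.
    have -> : bas R (Ordinal Hj) = su2 R (Ordinal (isT : (0 < 3)%N)).
      by rewrite /su2; congr bas; apply: val_inj.
    by rewrite !QE // addr0 mulr0 mul0r mulr0.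
  - rewrite BHe //.
    have -> : bas R (Ordinal Hj) = su2 R (Ordinal (isT : (1 < 3)%N)).
      by rewrite /su2; congr bas; apply: val_inj.
    by rewrite !QE // addr0 mulr0 mul0r mulr0.
  - rewrite BHe //.
    have -> : bas R (Ordinal Hj) = su2 R (Ordinal (isT : (2 < 3)%N)).
      by rewrite /su2; congr bas; apply: val_inj.
    by rewrite !QE // addr0 mulr0 mul0r mulr0.
  - have -> : Ordinal Hj = iT by apply: val_inj.
    rewrite BHe // !QT //; ring.
  - by rewrite /BH !mxE /=; ring.
  - by rewrite /BH !mxE /=; ring.
have hX := basX_h R; have hY := basY_h R.
have qXX : qT (bas R iX) (bas R iX) = x1 * eps iX by rewrite /qT !bas_entry /=; ring.
have qYY : qT (bas R iY) (bas R iY) = y2 * eps iY by rewrite /qT !bas_entry /=; ring.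
have qXY : qT (bas R iX) (bas R iY) = y1 * eps iY by rewrite /qT !bas_entry /=; ring.
have qYX : qT (bas R iY) (bas R iX) = x2 * eps iX by rewrite /qT !bas_entry /=; ring.
have gXX : gmet eps (bas R iX) (bas R iX) = eps iX by rewrite gmet_bas bas_entry /=; ring.
have gYY : gmet eps (bas R iY) (bas R iY) = eps iY by rewrite gmet_bas bas_entry /=; ring.
have gXY : gmet eps (bas R iX) (bas R iY) = 0 by rewrite gmet_bas bas_entry /=; ring.
have entT : forall (c : R) (M : vec R), c *: bas R iT = M -> c = M 0 iT.
  by move=> c M <-; rewrite !mxE /=; ring.
have gEF : forall E F, is_horizontal E -> is_horizontal F ->
    gmet eps E F = eps iX * E 0 iX * F 0 iX + eps iY * E 0 iY * F 0 iY.
  move=> E F hE hF; rewrite [in LHS](horiz_dec _ _ hF) gmetC !gmetDl !gmetZl !gmet_basl; ring.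
have conf_iff : conformal_fol eps nabla <-> x1 = y2 /\ eps iX * x2 + eps iY * y1 = 0.
  split.
  - case=> V [hV hB].
    have a1 := entT _ _ (etrans (esym (BHf _ _ hX hX)) (hB _ _ hX hX)).
    have a2 := entT _ _ (etrans (esym (BHf _ _ hY hY)) (hB _ _ hY hY)).
    have a3 := entT _ _ (etrans (esym (BHf _ _ hX hY)) (hB _ _ hX hY)).
    rewrite qXX gXX !mxE in a1; rewrite qYY gYY !mxE in a2.
    rewrite qXY qYX gXY !mxE in a3.
    case: (heps iX) => hx; case: (heps iY) => hy; case: (heps iT) => ht;
      rewrite hx hy ht in a1 a2 a3 *; split; lra.
  - move=> [h12 hs]; exists ((eps iT * x1) *: bas R iT); split.
      by apply/rowP => j; rewrite !mxE; case: j => [[|[|[|[|[|[|j]]]]]] Hj] //=; rewrite mulr0.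
    move=> E F hE hF; rewrite BHf // scalerA gEF //.
    suff -> : eps iT * ((qT E F + qT F E) / 2) =
      (eps iX * E 0 iX * F 0 iX + eps iY * E 0 iY * F 0 iY) * (eps iT * x1) by [].
    apply/eqP; rewrite -subr_eq0; apply/eqP.
    transitivity (eps iT / 2 * (eps iX * x2 + eps iY * y1) *
       (E 0 iX * F 0 iY + E 0 iY * F 0 iX)); first by rewrite /qT -h12; field.
    by rewrite hs; ring.
split => //.
move=> hc; have [h12 hs] := conf_iff.1 hc; split.
- move=> hS.
  have a1 := entT _ _ (etrans (esym (BHf _ _ hX hX)) (hS _ _ hX hX)).
  have a2 := entT _ _ (etrans (esym (BHf _ _ hY hY)) (hS _ _ hY hY)).
  rewrite qXX !mxE in a1; rewrite qYY !mxE in a2.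
  case: (heps iX) => hx; case: (heps iY) => hy; case: (heps iT) => ht;
    rewrite hx hy ht in a1 a2 *; split; lra.
- move=> [hx1 hy2] E F hE hF; rewrite BHf //.
  have -> : eps iT * ((qT E F + qT F E) / 2) = 0; last by rewrite scale0r.
  transitivity (eps iT / 2 * (eps iX * x2 + eps iY * y1) *
     (E 0 iX * F 0 iY + E 0 iY * F 0 iX)); first by rewrite /qT hx1 hy2; field.
  by rewrite hs; ring.
Qed.
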